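(* Let $\mathbb{F}_q$ be a finite field with $q\neq 2$ and let $\mathcal{M}=\mathbb{F}_q\times\mathbb{F}_q^{*}\times\mathbb{F}_q$ with the relation: $(x_1,y_1,z_1)$ and $(x_2,y_2,z_2)$ commute iff $x_1y_2-y_1x_2=z_1-z_2$. Then $\omega(\mathcal{M})\ge 2q$.
   Context: $\omega(\mathcal{M})$ is the maximum cardinality of a subset of $\mathcal{M}$ no two distinct elements of which commute. *)

(* Defs.v *)
From mathcomp Require Import all_boot all_algebra all_field.
Set Implicit Arguments. Unset Strict Implicit. Unset Printing Implicit Defensive.
Import GRing.Theory.
Local Open Scope ring_scope.

(* Elements (x,y,z) of F_q x F_q x F_q are encoded as ((x, y), z). *)
Definition Mset (F : finFieldType) : {set F * F * F} :=
  [set a : F * F * F | a.1.2 != 0].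

Definition mcommute (F : finFieldType) (a b : F * F * F) : bool :=
  a.1.1 * b.1.2 - a.1.2 * b.1.1 == a.2 - b.2.

Definition noncommuting (F : finFieldType) (S : {set F * F * F}) : bool :=
  (S \subset Mset F) &&
  [forall a in S, forall b in S, (a != b) ==> ~~ mcommute a b].

Definition omegaM (F : finFieldType) : nat :=
  \max_(S : {set F * F * F} | noncommuting S) #|S|.

(* Main.v *)
Require Import Defs.
From mathcomp Require Import all_boot all_algebra all_field.
Set Implicit Arguments. Unset Strict Implicit. Unset Printing Implicit Defensive.
Import GRing.Theory.
From mathcomp Require Import ring.
Local Open Scope ring_scope.

Lemma exists_c (F : finFieldType) : (#|F| != 2)%N -> exists c : F, (c != 0) && (c != 1).
Proof.
move=> hq; case: (pickP (fun c : F => (c != 0) && (c != 1))) => [c Hc|H].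
  by exists c.
exfalso; move: hq; apply/negP; rewrite negbK eqn_leq card_finNzRing_gt1 andbT.
have -> : #|F| = #|[set (0:F)%R; (1:F)%R]|.
  apply: eq_card => x; rewrite !inE; move: (H x) => /negbT.
  by rewrite negb_and !negbK => /orP [] ->; rewrite ?orbT.
by rewrite cards2 eq_sym oner_neq0.
Qed.

Definition fS (F : finFieldType) (c : F) (u : F + F) : F * F * F :=
  match u with
  | inl x => (x, 1, c * x)
  | inr x => (x, c, x - 1)
  end%R.

Lemma fS_comm (F : finFieldType) (c : F) (c0 : c != 0%R) (c1 : c != 1%R) u v :
  mcommute (fS c u) (fS c v) -> u = v.
Proof.
rewrite /mcommute; case: u v => x [] y /= /eqP e.
- have H : ((1 - c) * (x - y) = (x * 1 - 1 * y) - (c * x - c * y))%R by ring.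
  rewrite e subrr in H; move/eqP: H; rewrite mulf_eq0 subr_eq0 eq_sym (negbTE c1).
  by rewrite subr_eq0 => /eqP ->.
- have H : (1 = (c * x - (y - 1)) - (x * c - 1 * y))%R by ring.
  by rewrite e subrr in H; move/eqP: H; rewrite oner_eq0.
- have H : (1 = (x * 1 - c * y) - ((x - 1) - c * y))%R by ring.
  by rewrite e subrr in H; move/eqP: H; rewrite oner_eq0.
- have H : ((c - 1) * (x - y) = (x * c - c * y) - ((x - 1) - (y - 1)))%R by ring.
  rewrite e subrr in H; move/eqP: H; rewrite mulf_eq0 subr_eq0 (negbTE c1).
  by rewrite subr_eq0 => /eqP ->.
Qed.

Local Close Scope ring_scope.
Theorem lemma6p3 (F : finFieldType) (hq : #|F| != 2) :
  2 * #|F| <= omegaM F.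
Proof.
have [c /andP [c0 c1]] := exists_c hq.
have inj : injective (fS c) by move=> u v e; apply: (fS_comm c0 c1); rewrite e /mcommute mulrC !subrr.
have -> : 2 * #|F| = #|fS c @: [set: F + F]|.
  by rewrite card_imset // cardsT card_sum mul2n addnn.
apply: leq_bigmax_cond.
apply/andP; split.
  apply/subsetP => a /imsetP [u _ ->]; rewrite inE.
  by case: u => x /=; rewrite ?oner_eq0.
apply/forallP => a; apply/implyP => /imsetP [u _ ->].
apply/forallP => b; apply/implyP => /imsetP [v _ ->].
apply/implyP => neq; apply/negP => /(fS_comm c0 c1) e.
by rewrite e eqxx in neq.
Qed.
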